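(* Let $\mathcal C$ be a prenex class of sentences. Then: (i) 1-satisfiability of sentences in $\mathcal C$ is decidable in $G_V$ for every Gödel set $V$ if and only if classical satisfiability of sentences in $\mathcal C$ is decidable; (ii) for any two Gödel sets $V,V'$, a sentence in $\mathcal C$ is 1-satisfiable in $G_V$ if and only if it is 1-satisfiable in $G_{V'}$.
   Context: A Gödel set is a closed set $V\subseteq[0,1]$ with $0,1\in V$. A $V$-interpretation assigns to each $k$-ary predicate a function $U^k\to V$ on a nonempty domain $U$ (constants and function symbols as usual); $\bot\mapsto 0$, $\wedge,\vee$ are $\min,\max$, $\mathcal I(A\supset B)=1$ if $\mathcal I(A)\le\mathcal I(B)$ and $=\mathcal I(B)$ otherwise, $\forall,\exists$ are $\inf,\sup$ over $U$. A sentence is 1-satisfiable in $G_V$ if some $V$-interpretation gives it value $1$; classical satisfiability is two-valued satisfiability. A prenex sentence has the form $Q_1x_1\dots Q_nx_nB$ with $Q_i\in\{\forall,\exists\}$ and $B$ quantifier-free; a prenex class is the set of prenex sentences whose quantifier prefix belongs to a fixed set of prefixes (possibly with a fixed restriction on the signature, e.g. function-free). *)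

(* Defs.v *)
From HB Require Import structures.
From mathcomp Require Import all_boot all_order all_algebra.
From mathcomp Require Import all_classical all_reals all_analysis.
From mathcomp Require Import Rstruct Rstruct_topology.

Set Implicit Arguments.
Unset Strict Implicit.
Unset Printing Implicit Defensive.

Import Order.TTheory GRing.Theory Num.Theory.
From Stdlib Require Rdefinitions.
Notation R := Rdefinitions.R.

(* Function / predicate symbols are indexed by nat; a symbol is the   *)
(* pair (name, arity), the arity being the number of arguments.       *)

Inductive term : Type :=
| TVar : nat -> term
| TFun : nat -> seq term -> term.

Inductive formula : Type :=
| FBot : formula
| FAtom : nat -> seq term -> formula
| FAnd : formula -> formula -> formula
| FOr : formula -> formula -> formula
| FImp : formula -> formula -> formula
| FAll : nat -> formula -> formula
| FEx : nat -> formula -> formula.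

Fixpoint fv_term (t : term) : seq nat :=
  match t with
  | TVar x => [:: x]
  | TFun _ ts => flatten (map fv_term ts)
  end.

Fixpoint fv (A : formula) : seq nat :=
  match A with
  | FBot => [::]
  | FAtom _ ts => flatten (map fv_term ts)
  | FAnd A B | FOr A B | FImp A B => fv A ++ fv B
  | FAll x A | FEx x A => seq.filter (predC1 x) (fv A)
  end.

Definition sentence (A : formula) : Prop := fv A = [::].

Fixpoint qfree (A : formula) : bool :=
  match A with
  | FBot | FAtom _ _ => true
  | FAnd A B | FOr A B | FImp A B => qfree A && qfree B
  | FAll _ _ | FEx _ _ => false
  end.

Inductive quant : Type := QAll | QEx.

Definition prenex_of (qs : seq quant) (xs : seq nat) (B : formula) : formula :=
  foldr (fun qx C => match qx.1 with
                     | QAll => FAll qx.2 C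
                     | QEx => FEx qx.2 C
                     end) B (zip qs xs).

Fixpoint fun_syms_term (t : term) : seq (nat * nat) :=
  match t with
  | TVar _ => [::]
  | TFun f ts => (f, size ts) :: flatten (map fun_syms_term ts)
  end.

Fixpoint fun_syms (A : formula) : seq (nat * nat) :=
  match A with
  | FBot => [::]
  | FAtom _ ts => flatten (map fun_syms_term ts)
  | FAnd A B | FOr A B | FImp A B => fun_syms A ++ fun_syms B
  | FAll _ A | FEx _ A => fun_syms A
  end.

Fixpoint pred_syms (A : formula) : seq (nat * nat) :=
  match A with
  | FBot => [::]
  | FAtom p ts => [:: (p, size ts)]
  | FAnd A B | FOr A B | FImp A B => pred_syms A ++ pred_syms B
  | FAll _ A | FEx _ A => pred_syms A
  end.

(* A prenex class: the prenex sentences whose quantifier prefix belongs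
   to a fixed set [Pref] of prefixes and whose signature (the sets of
   predicate symbols and of function symbols occurring in it) satisfies
   a fixed restriction [SigOK] (e.g. "no function symbols of arity > 0"
   for function-free classes; take [SigOK] always true for none). *)
Definition prenex_class (Pref : seq quant -> Prop)
    (SigOK : (nat * nat -> Prop) -> (nat * nat -> Prop) -> Prop)
    (A : formula) : Prop :=
  sentence A /\
  (exists (qs : seq quant) (xs : seq nat) (B : formula),
      qfree B /\ size qs = size xs /\ A = prenex_of qs xs B /\ Pref qs) /\
  SigOK (fun s => s \in pred_syms A) (fun s => s \in fun_syms A).

Local Open Scope ring_scope.
Local Open Scope classical_set_scope.

Definition godel_set (V : set R) : Prop :=
  closed V /\ (forall x, V x -> 0 <= x <= 1) /\ V 0 /\ V 1.

Definition upd (U : Type) (rho : nat -> U) (x : nat) (u : U) : nat -> U :=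
  fun y => if y == x then u else rho y.

Fixpoint teval (U : Type) (f : nat -> seq U -> U) (rho : nat -> U) (t : term)
  : U :=
  match t with
  | TVar x => rho x
  | TFun g ts => f g (map (teval f rho) ts)
  end.

(* an interpretation on the (nonempty, witnessed by g_elt) domain U *)
Record ginterp (U : Type) := GInterp {
  g_elt : U;
  g_fun : nat -> seq U -> U;
  g_pred : nat -> seq U -> R }.

Fixpoint geval (U : Type) (I : ginterp U) (rho : nat -> U) (A : formula) : R :=
  match A with
  | FBot => 0
  | FAtom p ts => g_pred I p (map (teval (g_fun I) rho) ts)
  | FAnd A B => Num.min (geval I rho A) (geval I rho B)
  | FOr A B => Num.max (geval I rho A) (geval I rho B)
  | FImp A B => if geval I rho A <= geval I rho B then 1 else geval I rho B
  | FAll x A => inf (range (fun u => geval I (upd rho x u) A))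
  | FEx x A => sup (range (fun u => geval I (upd rho x u) A))
  end.

Definition V_interp (V : set R) (U : Type) (I : ginterp U) : Prop :=
  forall p l, V (g_pred I p l).

Definition one_sat (V : set R) (A : formula) : Prop :=
  exists (U : Type) (I : ginterp U),
    V_interp V I /\ geval I (fun _ => g_elt I) A = 1.

Record cinterp (U : Type) := CInterp {
  c_elt : U;
  c_fun : nat -> seq U -> U;
  c_pred : nat -> seq U -> Prop }.

Fixpoint ceval (U : Type) (I : cinterp U) (rho : nat -> U) (A : formula) : Prop :=
  match A with
  | FBot => False
  | FAtom p ts => c_pred I p (map (teval (c_fun I) rho) ts)
  | FAnd A B => ceval I rho A /\ ceval I rho B
  | FOr A B => ceval I rho A \/ ceval I rho B
  | FImp A B => ceval I rho A -> ceval I rho B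
  | FAll x A => forall u, ceval I (upd rho x u) A
  | FEx x A => exists u, ceval I (upd rho x u) A
  end.

Definition csat (A : formula) : Prop :=
  exists (U : Type) (I : cinterp U), ceval I (fun _ => c_elt I) A.

Inductive rfun : Type :=
| RZero : rfun
| RSucc : rfun
| RProj : nat -> rfun
| RComp : rfun -> seq rfun -> rfun
| RPrec : rfun -> rfun -> rfun
| RMin : rfun -> rfun.

(* big-step semantics: reval f v y  means  f(v) converges to y *)
Inductive reval : rfun -> seq nat -> nat -> Prop :=
| ev_zero v : reval RZero v 0
| ev_succ x v : reval RSucc (x :: v) x.+1
| ev_proj i v : (i < size v)%N -> reval (RProj i) v (nth 0%N v i)
| ev_comp f gs v ws y :
    reval_list gs v ws -> reval f ws y -> reval (RComp f gs) v y
| ev_prec0 f g v y : reval f v y -> reval (RPrec f g) (0%N :: v) y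
| ev_precS f g n v z y :
    reval (RPrec f g) (n :: v) z -> reval g (n :: z :: v) y ->
    reval (RPrec f g) (n.+1 :: v) y
| ev_min f v n :
    reval f (n :: v) 0%N ->
    (forall m, (m < n)%N -> exists k, reval f (m :: v) k.+1) ->
    reval (RMin f) v n
with reval_list : seq rfun -> seq nat -> seq nat -> Prop :=
| evl_nil v : reval_list [::] v [::]
| evl_cons g gs v w ws :
    reval g v w -> reval_list gs v ws -> reval_list (g :: gs) v (w :: ws).

(* Goedel numbering of formulas (Cantor pairing) *)
Definition npair (x y : nat) : nat := ((x + y) * (x + y).+1 %/ 2 + y)%N.

Definition code_seq (s : seq nat) : nat :=
  foldr (fun a r => (npair a r).+1) 0%N s.

Fixpoint code_term (t : term) : nat :=
  match t with
  | TVar x => npair 0 x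
  | TFun f ts => npair 1 (npair f (code_seq (map code_term ts)))
  end.

Fixpoint code (A : formula) : nat :=
  match A with
  | FBot => npair 0 0
  | FAtom p ts => npair 1 (npair p (code_seq (map code_term ts)))
  | FAnd A B => npair 2 (npair (code A) (code B))
  | FOr A B => npair 3 (npair (code A) (code B))
  | FImp A B => npair 4 (npair (code A) (code B))
  | FAll x A => npair 5 (npair x (code A))
  | FEx x A => npair 6 (npair x (code A))
  end.

Definition decidable_on (C : formula -> Prop) (P : formula -> Prop) : Prop :=
  exists p : rfun, forall A, C A ->
    (P A -> reval p [:: code A] 1%N) /\ (~ P A -> reval p [:: code A] 0%N).

(* Main.v *)
Require Import Defs.
From mathcomp Require Import all_boot all_order all_algebra.
From mathcomp Require Import all_classical all_reals all_analysis.
From mathcomp Require Import Rstruct Rstruct_topology.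
From Stdlib Require Import Classical_Pred_Type.

Import Order.TTheory GRing.Theory Num.Theory.
Local Open Scope ring_scope.
Local Open Scope classical_set_scope.

Section Aux.
Variable (U : Type) (I : ginterp U).
Hypothesis Hb : forall p l, 0 <= g_pred I p l <= 1.

Lemma geval_bd A rho : 0 <= geval I rho A <= 1.
Proof.
elim: A rho => [|p ts|A IA B IB|A IA B IB|A IA B IB|x A IA|x A IA] rho /=.
- by rewrite lexx ler01.
- exact: Hb.
- have /andP[a0 a1] := IA rho; have /andP[b0 b1] := IB rho.
  rewrite ge_min a1 /= le_min a0 b0 //.
- have /andP[a0 a1] := IA rho; have /andP[b0 b1] := IB rho.
  rewrite le_max a0 /= ge_max a1 b1 //.
- have /andP[b0 b1] := IB rho.
  by case: ifP => _; rewrite ?ler01 ?lexx ?b0 ?b1.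
- apply/andP; split.
  + apply: lb_le_inf; first by exists (geval I (upd rho x (g_elt I)) A); exists (g_elt I).
    by move=> _ [u _ <-]; have /andP[] := IA (upd rho x u).
  + have /andP[_ h1] := IA (upd rho x (g_elt I)).
    apply: le_trans h1; apply: ge_inf; last by exists (g_elt I).
    by exists 0 => _ [u _ <-]; have /andP[] := IA (upd rho x u).
- apply/andP; split.
  + have /andP[h0 _] := IA (upd rho x (g_elt I)).
    apply: le_trans h0 _; apply: ub_le_sup; last by exists (g_elt I).
    by exists 1 => _ [u _ <-]; have /andP[] := IA (upd rho x u).
  + apply: ge_sup; first by exists (geval I (upd rho x (g_elt I)) A); exists (g_elt I).
    by move=> _ [u _ <-]; have /andP[] := IA (upd rho x u).
Qed.

Definition cJ : cinterp U :=
  CInterp (g_elt I) (g_fun I) (fun p l => 0 < g_pred I p l).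

Lemma qfree_hom B rho : qfree B -> (0 < geval I rho B <-> ceval cJ rho B).
Proof.
elim: B rho => [|p ts|A IA B IB|A IA B IB|A IA B IB|x A IA|x A IA] rho //= Hq.
- by rewrite ltxx.
- case/andP: Hq => qa qb; rewrite lt_min; split.
  + by case/andP => /(IA rho qa) ? /(IB rho qb).
  + by case => /(IA rho qa) -> /(IB rho qb) ->.
- case/andP: Hq => qa qb; rewrite lt_max; split.
  + by case/orP => [/(IA rho qa)|/(IB rho qb)]; [left|right].
  + by case => [/(IA rho qa)|/(IB rho qb)] ->; rewrite ?orbT.
- case/andP: Hq => qa qb; case: ifP => Hab.
  + split => // _ /(IA rho qa) Ha; apply/(IB rho qb); exact: lt_le_trans Ha Hab.
  + have Hba : geval I rho B < geval I rho A by rewrite ltNge Hab.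
    split.
    * by move=> /(IB rho qb) Hb' _.
    * move=> H; apply/(IB rho qb); apply: H; apply/(IA rho qa).
      apply: le_lt_trans Hba; by have /andP[] := geval_bd B rho.
Qed.

Lemma prenex_hom (l : seq (quant * nat)) B rho : qfree B ->
  0 < geval I rho (foldr (fun qx C => match qx.1 with
                     | QAll => FAll qx.2 C
                     | QEx => FEx qx.2 C
                     end) B l) ->
  ceval cJ rho (foldr (fun qx C => match qx.1 with
                     | QAll => FAll qx.2 C
                     | QEx => FEx qx.2 C
                     end) B l).
Proof.
move=> qB; elim: l rho => [|[q x] l IH] rho /=.
  by move/(qfree_hom B rho qB).
case: q => /= H.
- move=> u; apply: IH; apply: lt_le_trans H _.
  apply: ge_inf; last by exists u.
  by exists 0 => _ [v _ <-]; have /andP[] := geval_bd (foldr (fun qx C => match qx.1 with QAll => FAll qx.2 C | QEx => FEx qx.2 C end) B l) (upd rho x v).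
- apply: contrapT => Hn.
  have : sup (range (fun u => geval I (upd rho x u)
      (foldr (fun qx C => match qx.1 with
                     | QAll => FAll qx.2 C
                     | QEx => FEx qx.2 C
                     end) B l))) <= 0.
    apply: ge_sup; first by exists (geval I (upd rho x (g_elt I)) (foldr (fun qx C => match qx.1 with
                     | QAll => FAll qx.2 C
                     | QEx => FEx qx.2 C
                     end) B l)); exists (g_elt I).
    move=> _ [v _ <-]; rewrite leNgt; apply/negP => Hv.
    exact: (Hn (ex_intro _ v (IH _ Hv))).
  by rewrite leNgt H.
Qed.
End Aux.

Section Aux2.
Variable (U : Type) (J : cinterp U).
Definition gI : ginterp U :=
  GInterp (c_elt J) (c_fun J)
    (fun p l => if pselect (c_pred J p l) then 1 else 0).

Lemma class_hom A rho :
  (ceval J rho A -> geval gI rho A = 1) /\ (~ ceval J rho A -> geval gI rho A = 0).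
Proof.
elim: A rho => [|p ts|A IA B IB|A IA B IB|A IA B IB|x A IA|x A IA] rho /=.
- by split.
- by case: pselect.
- have [a1 a0] := IA rho; have [b1 b0] := IB rho.
  have [HA|HA] := pselect (ceval J rho A); have [HB|HB] := pselect (ceval J rho B);
  rewrite ?(a1 HA) ?(a0 HA) ?(b1 HB) ?(b0 HB) ?minxx ?(min_idPl ler01) ?(min_idPr ler01);
  split => //; by case.
- have [a1 a0] := IA rho; have [b1 b0] := IB rho.
  have [HA|HA] := pselect (ceval J rho A); have [HB|HB] := pselect (ceval J rho B);
  rewrite ?(a1 HA) ?(a0 HA) ?(b1 HB) ?(b0 HB) ?maxxx ?(max_idPl ler01) ?(max_idPr ler01);
  split => //; (try by case); (try by move=> H; exfalso; apply: H; first [by left | by right]).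
- have [a1 a0] := IA rho; have [b1 b0] := IB rho; split.
  + move=> H; have [/H /b1 ->|/a0 ->] := pselect (ceval J rho A).
      by case: ifP.
    by have [/b1 ->|/b0 ->] := pselect (ceval J rho B); rewrite ?ler01 ?lexx.
  + move=> H.
    have HA : ceval J rho A by apply: contrapT => HA; apply: H => /HA.
    have HB : ~ ceval J rho B by move=> HB; apply: H.
    by rewrite (a1 HA) (b0 HB); case: ifP => //; rewrite ler10.
- have bd : forall u, 0 <= geval gI (upd rho x u) A <= 1.
    move=> u; have [/(IA (upd rho x u)).1 ->|/(IA (upd rho x u)).2 ->] :=
      pselect (ceval J (upd rho x u) A); by rewrite ?lexx ?ler01.
  have ne : range (fun u => geval gI (upd rho x u) A) !=set0.
    by exists (geval gI (upd rho x (c_elt J)) A); exists (c_elt J).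
  have hlb : has_lbound (range (fun u => geval gI (upd rho x u) A)).
    by exists 0 => _ [v _ <-]; have /andP[] := bd v.
  split.
  + move=> H; apply/le_anti/andP; split.
    * have h := ge_inf hlb (ex_intro2 _ _ (c_elt J) I erefl).
      by rewrite ((IA _).1 (H _)) in h.
    * by apply: lb_le_inf => // _ [v _ <-]; rewrite ((IA _).1 (H v)).
  + move=> /not_all_ex_not [u Hu]; apply/le_anti/andP; split.
    * have h := ge_inf hlb (ex_intro2 _ _ u I erefl).
      by rewrite ((IA _).2 Hu) in h.
    * by apply: lb_le_inf => // _ [v _ <-]; have /andP[] := bd v.
- have bd : forall u, 0 <= geval gI (upd rho x u) A <= 1.
    move=> u; have [/(IA (upd rho x u)).1 ->|/(IA (upd rho x u)).2 ->] :=
      pselect (ceval J (upd rho x u) A); by rewrite ?lexx ?ler01.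
  have ne : range (fun u => geval gI (upd rho x u) A) !=set0.
    by exists (geval gI (upd rho x (c_elt J)) A); exists (c_elt J).
  have hub : has_ubound (range (fun u => geval gI (upd rho x u) A)).
    by exists 1 => _ [v _ <-]; have /andP[] := bd v.
  split.
  + move=> [u Hu]; apply/le_anti/andP; split.
    * by apply: ge_sup => // _ [v _ <-]; have /andP[] := bd v.
    * have h := ub_le_sup hub (ex_intro2 _ _ u I erefl).
      by rewrite ((IA _).1 Hu) in h.
  + move=> H; apply/le_anti/andP; split.
    * apply: ge_sup => // _ [v _ <-]; rewrite ((IA _).2) //; by move=> Hv; apply: H; exists v.
    * have h := ub_le_sup hub (ex_intro2 _ _ (c_elt J) I erefl).
      have /andP[h0 _] := bd (c_elt J); exact: le_trans h0 h.
Qed.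
End Aux2.

Lemma key V A : godel_set V ->
  (exists (qs : seq quant) (xs : seq nat) (B : formula),
      qfree B /\ size qs = size xs /\ A = prenex_of qs xs B /\ True) ->
  (one_sat V A <-> csat A).
Proof.
move=> [_ [HV [V0 V1]]] [qs [xs [B [qB [_ [-> _]]]]]]; split.
- move=> [U [I [HI H1]]].
  exists U, (cJ U I); apply: (@prenex_hom U I (fun p l => HV _ (HI p l)) (zip qs xs) B _ qB).
  by rewrite H1 ltr01.
- move=> [U [J HJ]]; exists U, (gI U J); split.
  + by move=> p l /=; case: pselect.
  + exact: ((class_hom U J _ _).1 HJ).
Qed.

Lemma godel01 : godel_set `[0, 1].
Proof.
split; first exact: interval_closed.
split; first by move=> x; rewrite /= in_itv.
by split; rewrite /= in_itv /= lexx ler01.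
Qed.

Theorem mainTheorem5 (Pref : seq quant -> Prop)
    (SigOK : (nat * nat -> Prop) -> (nat * nat -> Prop) -> Prop) :
  ((forall V : set R, godel_set V ->
      decidable_on (prenex_class Pref SigOK) (one_sat V))
    <-> decidable_on (prenex_class Pref SigOK) csat) /\
  (forall V V' : set R, godel_set V -> godel_set V' ->
     forall A, prenex_class Pref SigOK A -> (one_sat V A <-> one_sat V' A)).
Proof.
have K : forall V A, godel_set V -> prenex_class Pref SigOK A ->
    (one_sat V A <-> csat A).
  move=> V A gV [_ [[qs [xs [B [h1 [h2 [h3 _]]]]]] _]].
  by apply: key => //; exists qs, xs, B.
split.
- split.
  + move=> H; have [p Hp] := H _ godel01; exists p => A CA.
    have E := K _ A godel01 CA.
    have [h1 h2] := Hp A CA; split.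
    * by move/E; exact: h1.
    * by move=> Hn; apply: h2 => /E.
  + move=> [p Hp] V gV; exists p => A CA.
    have E := K _ A gV CA.
    have [h1 h2] := Hp A CA; split.
    * by move/E; exact: h1.
    * by move=> Hn; apply: h2 => /E.
- move=> V V' gV gV' A CA.
  by rewrite (propext (K _ _ gV CA)) (propext (K _ _ gV' CA)).
Qed.
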